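(* Let $\Gamma$ be a graph on $n$ vertices with at least $cn^2$ edges, where $c>0$. Then there exists a set $X$ of vertices with $|X|\ge 2^{-5}cn$ such that for any two vertices $x,y\in X$ there are at least $2^{-35}c^9n^5$ paths of length $6$ between $x$ and $y$.
   Context: A path of length 6 between $x$ and $y$ is a sequence of vertices $x=v_0,v_1,\dots,v_6=y$ in which each consecutive pair $v_{i-1}v_i$ is an edge (vertices need not be distinct); the count is of such sequences. *)

(* Defs.v *)
From mathcomp Require Import all_boot all_order all_algebra.
Set Implicit Arguments. Unset Strict Implicit. Unset Printing Implicit Defensive.
Import Order.TTheory GRing.Theory Num.Theory.

Definition simple_graph (T : finType) (e : rel T) : Prop :=
  symmetric e /\ irreflexive e.

Definition edges (T : finType) (e : rel T) : {set {set T}} :=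
  [set E : {set T} | [exists x : T, exists y : T, e x y && (E == [set x; y])]].

(* Number of walks (sequences v_0 = x, v_1, ..., v_k = y, consecutive
   vertices adjacent, vertices not necessarily distinct) of length k. *)
Definition nwalks (T : finType) (e : rel T) (k : nat) (x y : T) : nat :=
  #|[set w : {ffun 'I_k.+1 -> T} |
     [&& w ord0 == x, w ord_max == y &
         [forall i : 'I_k, e (w (widen_ord (leqnSn k) i)) (w (lift ord0 i))]]]|.

(* Main.v *)
Require Import Defs.
From mathcomp Require Import all_boot all_order all_algebra.
From mathcomp Require Import zify ring lra.
Set Implicit Arguments. Unset Strict Implicit. Unset Printing Implicit Defensive.
Import Order.TTheory GRing.Theory Num.Theory.
Definition cod (T : finType) (e : rel T) (a b : T) : nat :=
  \sum_m (e a m && e m b).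

Lemma sum_pair (A B : finType) (F : A * B -> nat) :
  \sum_t F t = \sum_a \sum_b F (a, b).
Proof. by rewrite pair_big; apply: eq_bigr => -[]. Qed.

Lemma sum_bool_card (A : finType) (P : pred A) :
  \sum_t (P t : nat) = #|[set t | P t]|.
Proof. rewrite -sum1dep_card [RHS]big_mkcond; by apply: eq_bigr => t _; case: (P t). Qed.

Definition wcond (T : finType) (e : rel T) (x y : T) (t : T * T * T * T * T) : bool :=
  let: ((((u, w), p), q), r) := t in
  [&& e x p, e p u, e u q, e q w, e w r & e r y].

Definition wmap (T : finType) (x y : T) (t : T * T * T * T * T) : {ffun 'I_7 -> T} :=
  let: ((((u, w), p), q), r) := t in
  [ffun i : 'I_7 => nth x [:: x; p; u; q; w; r; y] i].

Lemma walks6_ge (T : finType) (e : rel T) (x y : T) :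
  \sum_u \sum_w cod e x u * cod e u w * cod e w y <= nwalks e 6 x y.
Proof.
have -> : \sum_u \sum_w cod e x u * cod e u w * cod e w y =
          \sum_t (wcond e x y t : nat).
  rewrite !sum_pair; apply: eq_bigr => u _; apply: eq_bigr => w _.
  rewrite /cod big_distrlr big_distrl /=; apply: eq_bigr => p _.
  rewrite big_distrl /=; apply: eq_bigr => q _.
  rewrite big_distrr /=; apply: eq_bigr => r _.
  by case: (e x p) (e p u) (e u q) (e q w) (e w r) (e r y) => [] [] [] [] [] [].
have inj : injective (wmap x y).
  move=> [[[[u1 w1] p1] q1] r1] [[[[u2 w2] p2] q2] r2] /= H.
  have h k (hk : k < 7) := congr1 (fun f : {ffun 'I_7 -> T} => f (Ordinal hk)) H.
  move: (h 1 isT) (h 2 isT) (h 3 isT) (h 4 isT) (h 5 isT).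
  by rewrite !ffunE /= => -> -> -> -> ->.
rewrite sum_bool_card -(card_imset _ inj) /nwalks.
apply: subset_leq_card; apply/subsetP => _ /imsetP [t tQ ->].
move: tQ; rewrite !inE.
case: t => [[[[u w] p] q] r] /= /and5P [h1 h2 h3 h4 /andP [h5 h6]].
rewrite !ffunE /= !eqxx /=.
apply/forallP => -[i hi]; rewrite !ffunE.
by case: i hi => [|[|[|[|[|[|i]]]]]] hi.
Qed.

Lemma sum_nbr (T : finType) (e : rel T) (esym : symmetric e) (F : T -> T -> nat) :
  \sum_v \sum_(x in [set b | e v b]) \sum_(u in [set b | e v b]) F x u =
  \sum_x \sum_u F x u * cod e x u.
Proof.
transitivity (\sum_v \sum_x \sum_u (e v x && e v u) * F x u).
  apply: eq_bigr => v _; rewrite big_mkcond; apply: eq_bigr => x _.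
  rewrite inE; case: (e v x) => /=; last by rewrite big1.
  rewrite big_mkcond; apply: eq_bigr => u _; rewrite inE.
  by case: (e v u); rewrite ?mul1n ?mul0n.
rewrite exchange_big; apply: eq_bigr => x _.
rewrite exchange_big; apply: eq_bigr => u _.
rewrite /cod big_distrr /=; apply: eq_bigr => v _.
by rewrite (esym v x) mulnC.
Qed.

Lemma cod_sym (T : finType) (e : rel T) (esym : symmetric e) (a b : T) :
  cod e a b = cod e b a.
Proof. by apply: eq_bigr => m _; rewrite andbC (esym a m) (esym m b). Qed.

Lemma card_in_sum (A : finType) (S : {set A}) (P : pred A) :
  #|[set u in S | P u]| = \sum_(u in S) (P u : nat).
Proof.
rewrite -sum1dep_card big_mkcondr; apply: eq_bigr => u _; by case: (P u).
Qed.

Lemma edges_le (T : finType) (e : rel T) :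
  (#|edges e| <= \sum_v #|[set b | e v b]|)%N.
Proof.
have sub : edges e \subset (fun p : T * T => [set p.1; p.2]) @: [set p : T * T | e p.1 p.2].
  apply/subsetP => E; rewrite inE => /existsP [x /existsP [y /andP [exy /eqP ->]]].
  by apply/imsetP; exists (x, y); rewrite ?inE.
apply: (leq_trans (subset_leq_card sub)); apply: (leq_trans (leq_imset_card _ _)).
rewrite -sum_bool_card sum_pair; apply: eq_leq; apply: eq_bigr => x _.
by rewrite sum_bool_card.
Qed.

Lemma markov_aux (s x y b : nat) :
  (x + y = s -> y * s.+1 <= 8 * b -> 16 * b <= s * s -> s <= 2 * x)%N.
Proof. nia. Qed.

Lemma hg_aux (X B G I s : nat) :
  (8 * B <= s -> s <= 2 * X -> G = X - I -> I <= B -> 3 * X <= 4 * G)%N.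
Proof. lia. Qed.

Lemma cnt_aux (X gx gy p bd s : nat) :
  (3 * X <= 4 * gx -> 3 * X <= 4 * gy -> s <= 2 * X -> gx * gy <= p + bd ->
   16 * bd <= s * s -> 5 * (X * X) <= 16 * p)%N.
Proof.
move=> h1 h2 h3 h4 h5.
have := leq_mul h1 h2; have := leq_mul h3 h3; nia.
Qed.

Local Open Scope ring_scope.

Lemma final_aux (R : realFieldType) (c nr P w : R) :
  0 < c -> c <= 1 -> 0 <= nr -> 5 * c ^+ 2 * nr ^+ 2 <= 128 * P ->
  P * (c ^+ 2 * nr / 32) ^+ 3 <= w ->
  c ^+ 9 * nr ^+ 5 / (2%:R ^+ 22 * 8192) <= w.
Proof.
move=> c0 c1 nr0 hP hw; apply: le_trans hw.
have K0 : 0 <= (c ^+ 2 * nr / 32) ^+ 3.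
  by apply: exprn_ge0; apply: divr_ge0 => //; apply: mulr_ge0 => //; apply: sqr_ge0.
have hP' : 5 * c ^+ 2 * nr ^+ 2 / 128 <= P by lra.
apply: le_trans (ler_wpM2r K0 hP').
have t22 : (2%:R ^+ 22 : R) = 128 * 32 ^+ 3.
  have e5 : (2%:R ^+ 5 : R) = 32 by rewrite -natrX.
  have e7 : (2%:R ^+ 7 : R) = 128 by rewrite -natrX.
  by rewrite -e5 -e7 -exprM -exprD.
rewrite t22.
have A0 : 0 < (128 * 32 ^+ 3 : R) by apply: mulr_gt0; [lra | apply: exprn_gt0; lra].
have u0 : 0 <= c ^+ 8 * nr ^+ 5 by apply: mulr_ge0; apply: exprn_ge0 => //; exact: ltW.
have -> : c ^+ 9 * nr ^+ 5 / (128 * 32 ^+ 3 * 8192) =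
          (c ^+ 8 * nr ^+ 5) * ((c / 8192) * (128 * 32 ^+ 3)^-1).
  by field.
apply: (@le_trans _ _ ((c ^+ 8 * nr ^+ 5) * (5 * (128 * 32 ^+ 3)^-1))); last first.
  by rewrite le_eqVlt; apply/orP; left; apply/eqP; field.
apply: (ler_wpM2l u0). apply: ler_wpM2r; first by rewrite invr_ge0 ltW.
lra.
Qed.

Unset Implicit Arguments.

Theorem lemma2p2 (R : realFieldType) (T : finType) (e : rel T) (c : R) :
  simple_graph e -> 0 < c ->
  c * (#|T|%:R) ^+ 2 <= (#|edges e|)%:R ->
  exists X : {set T},
    c * #|T|%:R / 2%:R ^+ 5 <= (#|X|)%:R /\
    (forall x y, x \in X -> y \in X ->
       c ^+ 9 * (#|T|%:R) ^+ 5 / 2%:R ^+ 35 <= (nwalks e 6 x y)%:R).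
Proof.
move=> [esym _] c0 hE.
have [n0|npos] := posnP #|T|.
  exists set0; split; first by rewrite n0 mulr0 mul0r cards0.
  by move=> x y; rewrite inE.
pose n := #|T|.
pose nr : R := n%:R.
have nr0 : 0 < nr by rewrite ltr0n.
pose N v := [set b | e v b].
pose D := (\sum_v #|N v|)%N.
have hED : (#|edges e| <= D)%N := edges_le e.
have hDn : (D <= n * n)%N.
  apply: (@leq_trans (\sum_(v : T) n)%N); last by rewrite sum_nat_const.
  by apply: leq_sum => v _; exact: max_card.
have hD : c * nr ^+ 2 <= D%:R by apply: (le_trans hE); rewrite ler_nat.
have c1 : c <= 1.
  have h1 : (D%:R : R) <= nr ^+ 2 by rewrite -natrX ler_nat -mulnn.
  have h2 : 0 < nr ^+ 2 by rewrite exprn_gt0.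
  nra.
pose bad x u := (32 * cod e x u)%:R < c ^+ 2 * nr.
pose badv v := (\sum_(x in N v) #|[set u in N v | bad x u]|)%N.
have hbadsum : (\sum_v badv v = \sum_x \sum_u (bad x u : nat) * cod e x u)%N.
  rewrite -(sum_nbr esym (fun x u => (bad x u : nat))).
  apply: eq_bigr => v _; apply: eq_bigr => x _; by rewrite card_in_sum.
have cn0 : 0 <= c ^+ 2 * nr by rewrite mulr_ge0 ?sqr_ge0 ?ler0n.
have hbad : \sum_v (badv v)%:R <= nr ^+ 2 * (c ^+ 2 * nr / 32).
  rewrite -natr_sum hbadsum natr_sum.
  have h : forall x u, ((bad x u : nat) * cod e x u)%:R <= c ^+ 2 * nr / 32.
    move=> x u; case: (boolP (bad x u)) => hb; rewrite /= ?mul1n ?mul0n.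
      by move: hb; rewrite /bad natrM => hb; lra.
    by lra.
  apply: (@le_trans _ _ (\sum_(x : T) \sum_(u : T) (c ^+ 2 * nr / 32))).
    by apply: ler_sum => x _; rewrite natr_sum; apply: ler_sum => u _; exact: h.
  by rewrite !sumr_const -mulrnA -[_ *+ (_ * _)]mulr_natl natrM -expr2.
have hdeg : c ^+ 2 * nr ^+ 3 <= \sum_v (#|N v|%:R) ^+ 2.
  have pw : forall v, 2 * (c * nr) * (#|N v|%:R) - (c * nr) ^+ 2 <= (#|N v|%:R) ^+ 2.
    by move=> v; have := sqr_ge0 (#|N v|%:R - c * nr); nra.
  apply: (@le_trans _ _ (\sum_v (2 * (c * nr) * (#|N v|%:R) - (c * nr) ^+ 2))); last by apply: ler_sum => v _; exact: pw.
  rewrite sumrB -mulr_sumr sumr_const -natr_sum -[_ *+ #|_|]mulr_natl -/n -/nr -/D.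
  have : 0 <= c * nr by rewrite mulr_ge0 ?ltW.
  nra.
pose f v : R := (#|N v|%:R) ^+ 2 - 16 * (badv v)%:R.
have hf : nr * (c ^+ 2 * nr ^+ 2 / 2) <= \sum_v f v.
  rewrite sumrB -mulr_sumr; lra.
have [v hv] : exists v, c ^+ 2 * nr ^+ 2 / 2 <= f v.
  case: (pickP (fun v => c ^+ 2 * nr ^+ 2 / 2 <= f v)) => [v hv|hn]; first by exists v.
  move/card_gt0P: npos => [v0 _].
  have : \sum_v f v < \sum_(v : T) (c ^+ 2 * nr ^+ 2 / 2).
    apply: ltr_sum; first by apply/hasP; exists v0; rewrite ?mem_index_enum.
    by move=> v _; rewrite ltNge hn.
  rewrite sumr_const -[_ *+ #|_|]mulr_natl -/n -/nr => h.
  by move: (lt_le_trans h hf); rewrite ltxx.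
pose S := N v.
pose s := #|S|.
have hbv0 : 0 <= (badv v)%:R :> R by rewrite ler0n.
have hs : c ^+ 2 * nr ^+ 2 / 2 + 16 * (badv v)%:R <= s%:R ^+ 2.
  by move: hv; rewrite /f -/S -/s; lra.
have h16 : (16 * badv v <= s * s)%N.
  rewrite -(ler_nat R) !natrM -expr2.
  have : 0 <= c ^+ 2 * nr ^+ 2 / 2 by apply: divr_ge0; [apply: mulr_ge0; apply: sqr_ge0 | done].
  lra.
pose B x := [set u in S | bad x u].
have hbB : badv v = (\sum_(x in S) #|B x|)%N by [].
pose P x := (8 * #|B x| <= s)%N.
pose X := [set x in S | P x].
have hX : (s <= 2 * #|X|)%N.
  pose Y := [set x in S | ~~ P x].
  have hXY : (#|X| + #|Y| = s)%N.
    rewrite /X /Y !card_in_sum -big_split /= /s -sum1_card.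
    by apply: eq_bigr => x _; case: (P x).
  have hY : (#|Y| * s.+1 <= 8 * badv v)%N.
    rewrite hbB big_distrr /= /Y card_in_sum big_distrl /=.
    apply: leq_sum => x _; rewrite /P; case: (leqP (8 * #|B x|) s) => h /=; first by [].
    by rewrite mul1n.
  exact: markov_aux hXY hY h16.
have hXr : (s%:R : R) <= 2 * #|X|%:R.
  by rewrite -(ler_nat R) natrM in hX.
have hs2 : c ^+ 2 * nr ^+ 2 / 2 <= s%:R ^+ 2 by lra.
have s0 : (0 : R) <= s%:R by rewrite ler0n.
have cnr0 : 0 <= c * nr by rewrite mulr_ge0 ?ltW.
have e5 : (2%:R ^+ 5 : R) = 32 by rewrite -natrX.
have e35 : (2%:R ^+ 35 : R) = 2%:R ^+ 22 * 8192.
  have e13 : (2%:R ^+ 13 : R) = 8192 by rewrite -natrX.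
  by rewrite -e13 -exprD.
exists X; split.
  rewrite e5 -/n -/nr.
  have : c * nr / 16 <= s%:R by nra.
  lra.
move=> x y xX yX.
pose G z := X :\: B z.
have XS w : w \in X -> w \in S by rewrite inE => /andP [].
have GX z w : w \in G z -> w \in X by rewrite inE => /andP [].
have Gnb z w : w \in G z -> ~~ bad z w.
  move=> wG; move: (wG); rewrite inE => /andP [wB _].
  by move: wB; rewrite inE (XS _ (GX _ _ wG)).
have hG z : z \in X -> (3 * #|X| <= 4 * #|G z|)%N.
  move=> zX; have : (8 * #|B z| <= s)%N by move: zX; rewrite inE => /andP [].
  move=> h8; have := cardsD X (B z); have := subset_leq_card (subsetIr X (B z)).
  move=> h1 h2; exact: hg_aux h8 hX h2 h1.
pose BadS := [set p : T * T | [&& p.1 \in S, p.2 \in S & bad p.1 p.2]].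
have hBadS : #|BadS| = badv v.
  rewrite /BadS -sum_bool_card sum_pair hbB [RHS]big_mkcond /=.
  apply: eq_bigr => a _; case: (boolP (a \in S)) => aS /=; last by rewrite big1.
  rewrite card_in_sum [RHS]big_mkcond; apply: eq_bigr => b _ /=.
  by case: (b \in S).
pose PP := [set p : T * T | [&& p.1 \in G x, p.2 \in G y & ~~ bad p.1 p.2]].
have hPP : (#|G x| * #|G y| <= #|PP| + #|BadS|)%N.
  rewrite -cardsX; apply: (@leq_trans #|PP :|: BadS|).
    apply: subset_leq_card; apply/subsetP => -[a b]; rewrite in_setX /= => /andP [aG bG].
    rewrite inE; apply/orP; case: (boolP (bad a b)) => hb; [right | left]; rewrite inE /=.
      by rewrite (XS _ (GX _ _ aG)) (XS _ (GX _ _ bG)) hb.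
    by rewrite aG bG hb.
  by rewrite -cardsUI leq_addr.
have hcount : (5 * (#|X| * #|X|) <= 16 * #|PP|)%N.
  rewrite hBadS in hPP; exact: cnt_aux (hG x xX) (hG y yX) hX hPP h16.
have hw : (\sum_(p in PP) cod e x p.1 * cod e p.1 p.2 * cod e p.2 y <= nwalks e 6 x y)%N.
  apply: leq_trans (walks6_ge e x y).
  have -> : (\sum_u \sum_w cod e x u * cod e u w * cod e w y =
             \sum_(p : T * T) cod e x p.1 * cod e p.1 p.2 * cod e p.2 y)%N.
    by rewrite sum_pair.
  rewrite big_mkcond; apply: leq_sum => p _; by case: (p \in PP).
pose K := c ^+ 2 * nr / 32.
have hK a b : ~~ bad a b -> K <= (cod e a b)%:R.
  by rewrite /bad -leNgt natrM /K => h; lra.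
have K0 : 0 <= K by rewrite /K; apply: divr_ge0 => //.
have hsum : #|PP|%:R * K ^+ 3 <= (nwalks e 6 x y)%:R.
  apply: (@le_trans _ _ (\sum_(p in PP) K ^+ 3)); first by rewrite sumr_const mulr_natl.
  apply: (@le_trans _ _ ((\sum_(p in PP) cod e x p.1 * cod e p.1 p.2 * cod e p.2 y)%N%:R)); last by rewrite ler_nat.
  rewrite natr_sum; apply: ler_sum => p; rewrite inE => /and3P [h1 h2 h3].
  rewrite !natrM exprS expr2 mulrA.
  apply: ler_pM; first by apply: mulr_ge0.
  - by [].
  - apply: ler_pM => //; [exact: hK (Gnb _ _ h1) | exact: hK h3].
  by rewrite (cod_sym esym); apply: hK; apply: Gnb h2.
have hP : 5 * c ^+ 2 * nr ^+ 2 <= 128 * #|PP|%:R.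
  have hc : 5 * (#|X|%:R * #|X|%:R) <= 16 * #|PP|%:R :> R.
    by rewrite -(ler_nat R) !natrM in hcount.
  have : (s%:R : R) ^+ 2 <= 4 * (#|X|%:R * #|X|%:R) by nra.
  lra.
rewrite e35 -/n -/nr.
exact: final_aux c0 c1 (ltW nr0) hP hsum.
Qed.
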